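(* Assume H1 and that at least one of H2, H3 holds. Let $W=W_q$ for some $q\in\mathbb{N}^*$ if H2 holds and $W=W_\alpha$ for some $\alpha<\eta$ if H3 holds. Then $\sup_{\theta\in\Theta}\{\pi_\theta(W)+\bar\pi_\theta(W)\}<+\infty$.
   Context: $\|\cdot\|$ Euclidean, $\Theta\subset\mathbb{R}^{d_\Theta}$ nonempty. $\mathtt{m}$-convex: $V(tx+(1-t)y)\le tV(x)+(1-t)V(y)-(\mathtt{m}/2)t(1-t)\|x-y\|^2$. H1: for every $\theta\in\Theta$ convex $V_\theta,\bar V_\theta,U_\theta,\bar U_\theta:\mathbb{R}^d\to[0,\infty)$ with (a) $\pi_\theta(x)\propto e^{-V_\theta(x)-U_\theta(x)}$, $\bar\pi_\theta(x)\propto e^{-\bar V_\theta(x)-\bar U_\theta(x)}$ probability densities and $\min(\inf_\theta\int e^{-V_\theta-U_\theta},\inf_\theta\int e^{-\bar V_\theta-\bar U_\theta})>0$; (b) $V_\theta,\bar V_\theta$ $C^1$ with $L$-Lipschitz gradients, and for each $\theta$ minimizers of $V_\theta,\bar V_\theta$ with norm $\le R_{V,1}$ and minimum values of absolute value $\le R_{V,2}$; (c) $U_\theta,\bar U_\theta$ $M$-Lipschitz with points of norm $\le R_{U,1}$ where $|U_\theta|,|\bar U_\theta|\le R_{U,2}$ (all constants independent of $\theta$). H2: there is $\mathtt{m}>0$ with $V_\theta,\bar V_\theta$ $\mathtt{m}$-convex for all $\theta$. H3: there are $\eta>0,c\ge0$ with $\min(U_\theta(x),\bar U_\theta(x))\ge\eta\|x\|-c$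 for all $\theta,x$. $W_q(x)=1+\|x\|^{2q}$, $W_\alpha(x)=\exp[\alpha\sqrt{1+\|x\|^2}]$; $\mu(W)=\int Wd\mu$. *)

(* Defs.v *)
From HB Require Import structures.
From mathcomp Require Import all_boot all_order all_algebra.
From mathcomp Require Import all_classical all_reals all_analysis.
Set Implicit Arguments. Unset Strict Implicit. Unset Printing Implicit Defensive.
Import Order.TTheory GRing.Theory Num.Theory.
Import numFieldNormedType.Exports.
Local Open Scope classical_set_scope.
Local Open Scope ring_scope.

Section Defs.
Variable R : realType.

Definition edot (d : nat) (u v : 'rV[R]_d) : R := \sum_(i < d) u 0 i * v 0 i.
Definition enorm (d : nat) (v : 'rV[R]_d) : R := Num.sqrt (edot v v).

(* Lebesgue integral on R^d of a nonnegative function, as the iterated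
   one-dimensional Lebesgue integral (Tonelli). *)
Fixpoint iint (d : nat) : ('rV[R]_d -> \bar R) -> \bar R :=
  match d with
  | 0 => fun f => f 0
  | d'.+1 => fun f =>
      (\int[@lebesgue_measure R]_x iint (fun v : 'rV[R]_d' => f (row_mx (\row_(j < 1) x) v)))%E
  end.

Definition Zconst (d : nat) (V U : 'rV[R]_d -> R) : \bar R :=
  iint (fun x => (expR (- V x - U x))%:E).

Definition gibbs_mean (d : nat) (V U W : 'rV[R]_d -> R) : \bar R :=
  (iint (fun x => (W x * expR (- V x - U x))%:E) * ((fine (Zconst V U))^-1)%:E)%E.

Definition convex_fun (d : nat) (f : 'rV[R]_d -> R) : Prop :=
  forall (x y : 'rV[R]_d) (t : R), 0 <= t <= 1 ->
    f (t *: x + (1 - t) *: y) <= t * f x + (1 - t) * f y.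

Definition strongly_convex (d : nat) (m : R) (f : 'rV[R]_d -> R) : Prop :=
  forall (x y : 'rV[R]_d) (t : R), 0 <= t <= 1 ->
    f (t *: x + (1 - t) *: y) <=
      t * f x + (1 - t) * f y - (m / 2) * t * (1 - t) * enorm (x - y) ^+ 2.

Definition has_gradient (d : nat) (f : 'rV[R]_d -> R) (g : 'rV[R]_d -> 'rV[R]_d) : Prop :=
  forall x, differentiable f x /\ forall v, 'd f x v = edot (g x) v.

Definition H1b_fun (d : nat) (L RV1 RV2 : R) (f : 'rV[R]_d -> R) : Prop :=
  (exists g : 'rV[R]_d -> 'rV[R]_d,
     has_gradient f g /\ forall x y, enorm (g x - g y) <= L * enorm (x - y)) /\
  (exists xs : 'rV[R]_d, (forall y, f xs <= f y) /\ enorm xs <= RV1 /\ `|f xs| <= RV2).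

Definition H1c_fun (d : nat) (M RU1 RU2 : R) (f : 'rV[R]_d -> R) : Prop :=
  (forall x y, `|f x - f y| <= M * enorm (x - y)) /\
  (exists x0 : 'rV[R]_d, enorm x0 <= RU1 /\ `|f x0| <= RU2).

Definition Wq (d : nat) (q : nat) (x : 'rV[R]_d) : R := 1 + enorm x ^+ (2 * q).
Definition Walpha (d : nat) (a : R) (x : 'rV[R]_d) : R :=
  expR (a * Num.sqrt (1 + enorm x ^+ 2)).

End Defs.

(* Main.v *)
Require Import Defs.
From HB Require Import structures.
From mathcomp Require Import all_boot all_order all_algebra.
From mathcomp Require Import all_classical all_reals all_analysis.
From mathcomp Require Import measurable_realfun exponential_distribution ring lra.
Import Order.TTheory GRing.Theory Num.Theory.
Import numFieldNormedType.Exports.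
Local Open Scope classical_set_scope.
Local Open Scope ring_scope.
Section Int.
Variable R : realType.
Local Notation mu := (@lebesgue_measure R).

Lemma le_int (f g : R -> \bar R) : (forall x, (0 <= f x)%E) ->
  (forall x, (f x <= g x)%E) -> (\int[mu]_x f x <= \int[mu]_x g x)%E.
Proof.
move=> f0 fg.
have g0 : forall x, (0 <= g x)%E by move=> x; exact: le_trans (f0 x) (fg x).
rewrite (ge0_integralTE mu f0) (ge0_integralTE mu g0) /=.
apply: ereal_sup_le => _ [h hf <-]; exists h => //= x.
exact: le_trans (hf x) (fg x).
Qed.

Lemma iint_ge0 d (f : 'rV[R]_d -> \bar R) : (forall x, (0 <= f x)%E) -> (0 <= iint f)%E.
Proof.
elim: d f => [|d IH] f f0 /=; first exact: f0.
apply: integral_ge0 => x _; apply: IH => v; exact: f0.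
Qed.

Lemma le_iint d (f g : 'rV[R]_d -> \bar R) : (forall x, (0 <= f x)%E) ->
  (forall x, (f x <= g x)%E) -> (iint f <= iint g)%E.
Proof.
elim: d f g => [|d IH] f g f0 fg /=; first exact: fg.
apply: le_int => x; first by apply: iint_ge0 => v; exact: f0.
apply: IH => v; [exact: f0 | exact: fg].
Qed.

Lemma int_refl (f : R -> \bar R) : measurable_fun [set: R] f -> (forall x, (0 <= f x)%E) ->
  (\int[mu]_x f (- x)%R = \int[mu]_x f x)%E.
Proof.
move=> mf f0.
have mN : measurable_fun [set: R] (-%R : R -> measurableTypeR R).
  exact: oppr_measurable.
have E : (\int[pushforward mu (-%R : R -> measurableTypeR R)]_x f x = \int[mu]_x f x)%E.
  apply: eq_measure_integral => A mA _; exact: lebesgue_measureN.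
rewrite -E ge0_integral_pushforward //=.
Qed.

Lemma laplace (b c : R) : 0 < b -> 0 <= c ->
  (\int[mu]_x (c * expR (- b * `|x|))%:E <= (c * (2 / b))%:E)%E.
Proof.
move=> b0 c0.
pose p := exponential_pdf b.
have p0 : forall x, 0 <= p x by move=> x; apply: exponential_pdf_ge0; exact: ltW.
have mp : measurable_fun [set: R] p by exact: measurable_exponential_pdf.
have cb0 : 0 <= c / b by rewrite divr_ge0 // ltW.
have mpE : measurable_fun [set: R] (fun x => ((c / b) * p x)%:E).
  by apply/measurable_EFinP; apply: measurable_funM => //; exact: measurable_cst.
have ip : (\int[mu]_x ((c / b) * p x)%:E = (c / b)%:E)%E.
  under eq_integral do rewrite EFinM.
  rewrite ge0_integralZl_EFin //; last by apply/measurable_EFinP.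
  + by rewrite integral_exponential_pdf // mule1.
  + by move=> x _; rewrite lee_fin.
apply: (@le_trans _ _ (\int[mu]_x (((c / b) * p x)%:E + ((c / b) * p (- x)%R)%:E))%E).
  apply: le_int => x; first by rewrite lee_fin mulr_ge0 // expR_ge0.
  rewrite -EFinD lee_fin.
  have pE : forall y, 0 <= y -> p y = b * expR (- b * y).
    by move=> y y0; rewrite /p exponential_pdfE.
  have [x0|x0] := leP 0 x.
    rewrite pE // ger0_norm // mulrA divfK ?gt_eqF //.
    by rewrite lerDl mulr_ge0.
  - rewrite (pE (- x)); last by rewrite oppr_ge0 ltW.
    rewrite ltr0_norm // mulrA divfK ?gt_eqF // mulrN.
    by rewrite lerDr mulr_ge0.
rewrite ge0_integralD //; last first.
- apply/measurable_EFinP; apply: measurable_funM => //.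
  by apply: measurableT_comp => //; exact: oppr_measurable.
- by move=> x _; rewrite lee_fin mulr_ge0.
- by move=> x _; rewrite lee_fin mulr_ge0.
rewrite (@int_refl (fun x => ((c / b) * p x)%:E)) //; last by move=> x; rewrite lee_fin mulr_ge0.
rewrite ip -EFinD lee_fin.
by rewrite le_eqVlt; apply/orP; left; apply/eqP; ring.
Qed.

Definition S1 d (x : 'rV[R]_d) : R := \sum_(i < d) `|x 0 i|.
Arguments S1 {d}.

Lemma S1_row d (x : R) (v : 'rV[R]_d) :
  S1 (row_mx (\row_(j < 1) x) v : 'rV[R]_d.+1) = `|x| + S1 v.
Proof.
rewrite /S1 (@big_split_ord _ _ _ 1 d) /= big_ord1.
rewrite (row_mxEl (\row_(j < 1) x) v 0 ord0) mxE; congr (_ + _).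
by apply: eq_bigr => i _; rewrite (row_mxEr (\row_(j < 1) x) v 0 i).
Qed.

Lemma iint_exp d (b K : R) : 0 < b -> 0 <= K ->
  (iint (fun x : 'rV[R]_d => (K * expR (- b * S1 x))%:E) <= (K * (2 / b) ^+ d)%:E)%E.
Proof.
move=> b0; elim: d K => [|d IH] K K0 /=.
  by rewrite /S1 big_ord0 mulr0 expR0 expr0.
apply: (@le_trans _ _ (\int[mu]_x ((K * (2 / b) ^+ d) * expR (- b * `|x|))%:E)%E).
  apply: le_int => x.
    by apply: iint_ge0 => v; rewrite lee_fin mulr_ge0 // expR_ge0.
  have -> : (fun v : 'rV[R]_d => (K * expR (- b * S1 (row_mx (\row_(j < 1) x) v : 'rV[R]_d.+1)))%:E)
     = (fun v => ((K * expR (- b * `|x|)) * expR (- b * S1 v))%:E).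
    by apply: funext => v; rewrite S1_row mulrDr expRD mulrA.
  apply: le_trans (IH _ _) _; first by rewrite mulr_ge0 // expR_ge0.
  by rewrite lee_fin le_eqVlt; apply/orP; left; apply/eqP; ring.
have Kd : 0 <= K * (2 / b) ^+ d by rewrite mulr_ge0 // exprn_ge0 // divr_ge0 // ltW.
have -> : K * (2 / b) ^+ d.+1 = K * (2 / b) ^+ d * (2 / b) by rewrite exprSr; ring.
exact: (laplace b (K * (2 / b) ^+ d) b0 Kd).
Qed.

Lemma coord_le_enorm d (x : 'rV[R]_d) i : `|x 0 i| <= enorm x.
Proof.
rewrite /enorm /edot -sqrtr_sqr ler_sqrt; last first.
  by apply: sumr_ge0 => j _; rewrite -expr2 sqr_ge0.
rewrite (bigD1 i) //= expr2 lerDl.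
by apply: sumr_ge0 => j _; rewrite -expr2 sqr_ge0.
Qed.

Lemma S1_le d (x : 'rV[R]_d) : S1 x <= enorm x *+ d.
Proof.
rewrite /S1; apply: (@le_trans _ _ (\sum_(i < d) enorm x)).
  by apply: ler_sum => i _; exact: coord_le_enorm.
by rewrite sumr_const card_ord.
Qed.

Lemma gibbs_bound d (V U W : 'rV[R]_d -> R) (K be c : R) :
  0 < be -> 0 <= K -> 0 < c ->
  (forall x, 0 <= W x * expR (- V x - U x) <= K * expR (- be * enorm x)) ->
  (c%:E <= Zconst V U)%E -> (Zconst V U < +oo)%E ->
  (gibbs_mean V U W <= (K * (2 / (be / d.+1%:R)) ^+ d / c)%:E)%E.
Proof.
move=> be0 K0 c0 hW cZ Zoo.
set be' := be / d.+1%:R.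
have be'0 : 0 < be' by rewrite divr_gt0 // ltr0n.
have hN : (iint (fun x => (W x * expR (- V x - U x))%:E) <= (K * (2 / be') ^+ d)%:E)%E.
  apply: (@le_trans _ _ (iint (fun x : 'rV[R]_d => (K * expR (- be' * S1 x))%:E))); last exact: iint_exp.
  apply: le_iint => x; first by rewrite lee_fin; case/andP: (hW x).
  rewrite lee_fin; apply: le_trans (proj2 (andP (hW x))) _.
  apply: ler_wpM2l => //; rewrite ler_expR !mulNr lerN2.
  apply: (@le_trans _ _ (be' * (enorm x *+ d.+1))).
    rewrite ler_pM2l //; apply: (@le_trans _ _ (enorm x *+ d)); first exact: S1_le.
    by rewrite mulrSr lerDl sqrtr_ge0.
  rewrite /be' -mulr_natr le_eqVlt; apply/orP; left; apply/eqP; field.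
  by rewrite -mulrS pnatr_eq0.
rewrite /gibbs_mean.
have B0 : 0 <= K * (2 / be') ^+ d by rewrite mulr_ge0 // exprn_ge0 // divr_ge0 // ltW.
have Zf : Zconst V U \is a fin_num.
  by rewrite ge0_fin_numE // (le_trans _ cZ) // lee_fin ltW.
have cz : c <= fine (Zconst V U) by rewrite -lee_fin fineK.
have z0 : 0 < fine (Zconst V U) by apply: lt_le_trans cz.
apply: le_trans (lee_wpmul2r _ hN) _; first by rewrite lee_fin invr_ge0 ltW.
rewrite -EFinM lee_fin ler_wpM2l // lef_pV2 ?posrE //.
Qed.

Lemma edot_ge0 d (x : 'rV[R]_d) : 0 <= edot x x.
Proof. by apply: sumr_ge0 => j _; rewrite -expr2 sqr_ge0. Qed.

Lemma enorm_ge0 d (x : 'rV[R]_d) : 0 <= enorm x.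
Proof. exact: sqrtr_ge0. Qed.

Lemma enorm_sq d (x : 'rV[R]_d) : enorm x ^+ 2 = edot x x.
Proof. by rewrite sqr_sqrtr // edot_ge0. Qed.

Lemma edot_sub_le d (x y : 'rV[R]_d) :
  edot x x <= 2 * edot (x - y) (x - y) + 2 * edot y y.
Proof.
rewrite /edot !mulr_sumr -big_split /=; apply: ler_sum => i _.
rewrite !mxE; have := sqr_ge0 (x 0 i - 2 * y 0 i); nra.
Qed.

Lemma sc_min d (V : 'rV[R]_d -> R) m xs x : strongly_convex m V ->
  (forall y, V xs <= V y) -> V xs + m / 4 * edot (x - xs) (x - xs) <= V x.
Proof.
move=> sc hmin.
have h1 : 0 <= (1 / 2 : R) <= 1 by apply/andP; split; lra.
have := sc x xs (1 / 2) h1.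
have := hmin ((1 / 2) *: x + (1 - 1 / 2) *: xs).
rewrite enorm_sq.
set e := edot _ _; set v := V _ => h2 h3.
have E : m / 2 * (1 / 2) * (1 - 1 / 2) * e = (m / 4 * e) / 2 by field.
rewrite E in h3; lra.
Qed.

Lemma poly_exp (a s : R) (q : nat) : 0 < a -> 0 <= s -> (0 < q)%N ->
  s ^+ q <= (2 * q%:R / a) ^+ q * expR (a * s / 2).
Proof.
move=> a0 s0 q0.
have qR : q%:R != 0 :> R by rewrite pnatr_eq0 -lt0n.
set y := a * s / (2 * q%:R).
have y0 : 0 <= y by rewrite /y; apply: divr_ge0; [apply: mulr_ge0; [exact: ltW|done] | apply: mulr_ge0; [done|exact: ler0n]].
have -> : expR (a * s / 2) = expR y ^+ q.
  by rewrite -expRM_natl; congr expR; rewrite /y; field.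
have hy : y <= expR y by apply: le_trans (expR_ge1Dx y); rewrite lerDr.
have := lerXn2r q y0 (expR_ge0 y) hy.
have -> : s ^+ q = (2 * q%:R / a) ^+ q * y ^+ q.
  rewrite -exprMn; congr (_ ^+ _); rewrite /y; field.
  by rewrite qR gt_eqF.
move=> h; apply: ler_wpM2l => //.
apply: exprn_ge0; apply: divr_ge0; [apply: mulr_ge0; [done|exact: ler0n] | exact: ltW].
Qed.

Lemma quad (a r : R) : 0 < a -> - a * r ^+ 2 + r <= - a * r ^+ 2 / 2 + 1 / (2 * a).
Proof.
move=> a0.
have h : 0 <= (a * r - 1) ^+ 2 / (2 * a) by rewrite divr_ge0 ?sqr_ge0 // mulr_ge0 // ltW.
have E : (a * r - 1) ^+ 2 / (2 * a) = a / 2 * r ^+ 2 - r + 1 / (2 * a).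
  by field; rewrite gt_eqF.
rewrite E in h.
have E2 : - a * r ^+ 2 / 2 = - (a / 2 * r ^+ 2) by ring.
rewrite E2; lra.
Qed.

Definition K2 (m RV1 RV2 : R) (q : nat) :=
  expR (RV2 + m / 4 * RV1 ^+ 2) * (1 + (2 * q%:R / (m / 8)) ^+ q) * expR (1 / (2 * (m / 8))).

Lemma P2 d (V U : 'rV[R]_d -> R) (m RV1 RV2 : R) (q : nat) : 0 < m -> (0 < q)%N ->
  strongly_convex m V -> (forall x, 0 <= U x) ->
  (exists xs, (forall y, V xs <= V y) /\ enorm xs <= RV1 /\ `|V xs| <= RV2) ->
  forall x, 0 <= Wq q x * expR (- V x - U x) <= K2 m RV1 RV2 q * expR (- 1 * enorm x).
Proof.
move=> m0 q0 sc U0 [xs [hmin [hxs hVxs]]] x.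
have W0 : 0 <= Wq q x by rewrite /Wq addr_ge0 // exprn_ge0 // enorm_ge0.
apply/andP; split; first by rewrite mulr_ge0 // expR_ge0.
set r := enorm x.
set s := edot x x.
have r0 : 0 <= r by exact: enorm_ge0.
have sr : s = r ^+ 2 by rewrite /r enorm_sq.
have s0 : 0 <= s by rewrite sr sqr_ge0.
set a := m / 8.
have a0 : 0 < a by rewrite /a divr_gt0.
set A := RV2 + m / 4 * RV1 ^+ 2.
have hV : - V x - U x <= A - a * s.
  have e1 := edot_sub_le _ x xs.
  have e2 : edot xs xs <= RV1 ^+ 2.
    rewrite -enorm_sq; apply: lerXn2r => //; rewrite ?nnegrE ?enorm_ge0 //.
    exact: le_trans (enorm_ge0 _ xs) hxs.
  have e3 := @sc_min d V m xs x sc hmin.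
  have e4 : - RV2 <= V xs by rewrite lerNl; apply: le_trans hVxs; rewrite -normrN ler_norm.
  have e5 := U0 x.
  have e6 : m / 4 * (s / 2 - RV1 ^+ 2) <= m / 4 * edot (x - xs) (x - xs).
    apply: ler_wpM2l; first by rewrite divr_ge0 // ltW.
    rewrite -/s in e1; lra.
  rewrite /A /a.
  have E : m / 4 * (s / 2 - RV1 ^+ 2) = m / 8 * s - m / 4 * RV1 ^+ 2 by field.
  rewrite E in e6; lra.
have WE : Wq q x = 1 + s ^+ q by rewrite /Wq sr -exprM.
rewrite WE.
apply: (@le_trans _ _ ((1 + s ^+ q) * expR (A - a * s))).
  by apply: ler_wpM2l; [rewrite -WE | rewrite ler_expR].
have hq := quad a r a0.
rewrite -sr in hq.
have ex1 : expR (A - a * s) <= expR A * (expR (- a * s / 2) * expR (1 / (2 * a)) * expR (- 1 * r)).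
  rewrite -!expRD ler_expR; lra.
have P := poly_exp a s q a0 s0 q0.
set E1 := expR (- a * s / 2).
set E2 := expR (a * s / 2).
have E12 : E2 * E1 = 1.
  by rewrite /E1 /E2 -expRD (_ : a * s / 2 + - a * s / 2 = 0) ?expR0 //; ring.
have E1le : E1 <= 1.
  rewrite /E1 expR_le1 mulNr mulNr oppr_le0; apply: divr_ge0 => //; apply: mulr_ge0 => //; exact: ltW.
have E10 : 0 <= E1 := expR_ge0 _.
set Q := (2 * q%:R / a) ^+ q.
fold Q in P; fold E2 in P.
have P' : s ^+ q * E1 <= Q.
  have := ler_wpM2r E10 P; by rewrite -mulrA E12 mulr1.
have h : (1 + s ^+ q) * E1 <= 1 + Q by rewrite mulrDl mul1r; lra.
have P0 : 0 <= 1 + s ^+ q by rewrite addr_ge0 // exprn_ge0.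
apply: le_trans (ler_wpM2l P0 ex1) _.
rewrite /K2 -/a -/A -/Q.
set eC := expR (1 / (2 * a)).
set eR := expR (-1 * r).
have -> : (1 + s ^+ q) * (expR A * (E1 * eC * eR)) = ((1 + s ^+ q) * E1) * (expR A * eC * eR) by ring.
have -> : expR A * (1 + Q) * eC * eR = (1 + Q) * (expR A * eC * eR) by ring.
by apply: ler_wpM2r => //; rewrite !mulr_ge0 // expR_ge0.
Qed.

Lemma P3 d (V U : 'rV[R]_d -> R) (eta c alpha : R) :
  (forall x, 0 <= V x) -> (forall x, eta * enorm x - c <= U x) ->
  forall x, 0 <= Walpha alpha x * expR (- V x - U x) <=
    expR (Num.max alpha 0 + c) * expR (- (eta - Num.max alpha 0) * enorm x).
Proof.
move=> V0 hU x.
apply/andP; split; first by rewrite mulr_ge0 // expR_ge0.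
rewrite /Walpha -!expRD ler_expR.
set r := enorm x; set al := Num.max alpha 0.
have r0 : 0 <= r by exact: enorm_ge0.
have al0 : 0 <= al by rewrite /al le_max lexx orbT.
have alal : alpha <= al by rewrite /al le_max lexx.
have hs : Num.sqrt (1 + r ^+ 2) <= 1 + r.
  rewrite -(@ger0_norm _ (1 + r)); last by rewrite addr_ge0.
  rewrite -sqrtr_sqr ler_sqrt; last by rewrite sqr_ge0.
  have -> : (1 + r) ^+ 2 = 1 + 2 * r + r ^+ 2 by ring.
  lra.
have s0 : 0 <= Num.sqrt (1 + r ^+ 2) by exact: sqrtr_ge0.
have h1 : alpha * Num.sqrt (1 + r ^+ 2) <= al * (1 + r).
  apply: le_trans (_ : al * Num.sqrt (1 + r ^+ 2) <= _).
    by apply: ler_wpM2r.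
  by apply: ler_wpM2l.
have := V0 x; have := hU x; rewrite -/r => h2 h3.
have E : al * (1 + r) = al + al * r by ring.
rewrite E in h1.
have E2 : - (eta - al) * r = al * r - eta * r by ring.
rewrite E2; lra.
Qed.
End Int.
Theorem lemma27 (R : realType) (d dT : nat) (Theta : set 'rV[R]_dT)
  (V Vb U Ub : 'rV[R]_dT -> 'rV[R]_d -> R)
  (L M RV1 RV2 RU1 RU2 : R) :
  Theta !=set0 ->
  (* H1 *)
  (forall th, Theta th ->
     convex_fun (V th) /\ convex_fun (Vb th) /\ convex_fun (U th) /\ convex_fun (Ub th) /\
     (forall x, 0 <= V th x /\ 0 <= Vb th x /\ 0 <= U th x /\ 0 <= Ub th x)) ->
  (* H1(a) *)
  (forall th, Theta th ->
     (Zconst (V th) (U th) < +oo)%E /\ (Zconst (Vb th) (Ub th) < +oo)%E) ->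
  (exists c : R, 0 < c /\ forall th, Theta th ->
     (c%:E <= Zconst (V th) (U th))%E /\ (c%:E <= Zconst (Vb th) (Ub th))%E) ->
  (* H1(b) *)
  (forall th, Theta th -> H1b_fun L RV1 RV2 (V th) /\ H1b_fun L RV1 RV2 (Vb th)) ->
  (* H1(c) *)
  (forall th, Theta th -> H1c_fun M RU1 RU2 (U th) /\ H1c_fun M RU1 RU2 (Ub th)) ->
  (* H2 case *)
  ((exists m : R, 0 < m /\ forall th, Theta th ->
       strongly_convex m (V th) /\ strongly_convex m (Vb th)) ->
     forall q : nat, (0 < q)%N ->
       exists C : R, forall th, Theta th ->
         (gibbs_mean (V th) (U th) (Wq q) + gibbs_mean (Vb th) (Ub th) (Wq q) <= C%:E)%E)
  /\
  (* H3 case *)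
  (forall eta c : R, 0 < eta -> 0 <= c ->
     (forall th, Theta th -> forall x,
        Num.min (U th x) (Ub th x) >= eta * enorm x - c) ->
     forall alpha : R, alpha < eta ->
       exists C : R, forall th, Theta th ->
         (gibbs_mean (V th) (U th) (Walpha alpha)
            + gibbs_mean (Vb th) (Ub th) (Walpha alpha) <= C%:E)%E).
Proof.
move=> _ H1 Za [c0 [c00 Zc]] Hb Hc; split.
- move=> [m [m0 hm]] q q0.
  pose K := @K2 R m RV1 RV2 q.
  have K0 : 0 <= K.
    rewrite /K /K2 mulr_ge0 ?expR_ge0 // mulr_ge0 ?expR_ge0 // addr_ge0 // exprn_ge0 //.
    apply: divr_ge0; first by apply: mulr_ge0 => //; exact: ler0n.
    by rewrite divr_ge0 // ltW.
  exists (K * (2 / (1 / d.+1%:R)) ^+ d / c0 + K * (2 / (1 / d.+1%:R)) ^+ d / c0).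
  move=> th Tth.
  have [[_ [xs1 h1]] [_ [xs2 h2]]] := Hb th Tth.
  have [_ [_ [_ [_ pos]]]] := H1 th Tth.
  have [sV sVb] := hm th Tth.
  have [Zc1 Zc2] := Zc th Tth.
  have [Zo1 Zo2] := Za th Tth.
  rewrite EFinD; apply: leeD.
  + apply: gibbs_bound => //.
    apply: P2 => //; first by move=> x; case: (pos x) => _ [_ []].
    by exists xs1.
  + apply: gibbs_bound => //.
    apply: P2 => //; first by move=> x; case: (pos x) => _ [_ []].
    by exists xs2.
- move=> eta c eta0 c0' hmin alpha alpha_lt.
  pose al := Num.max alpha 0.
  have be0 : 0 < eta - al by rewrite subr_gt0 /al gt_max alpha_lt eta0.
  pose K := expR (al + c).
  have K0 : 0 <= K by exact: expR_ge0.
  exists (K * (2 / ((eta - al) / d.+1%:R)) ^+ d / c0 + K * (2 / ((eta - al) / d.+1%:R)) ^+ d / c0).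
  move=> th Tth.
  have [_ [_ [_ [_ pos]]]] := H1 th Tth.
  have [Zc1 Zc2] := Zc th Tth.
  have [Zo1 Zo2] := Za th Tth.
  rewrite EFinD; apply: leeD.
  + apply: gibbs_bound => //.
    apply: P3; first by move=> x; case: (pos x).
    by move=> x; have := hmin th Tth x; rewrite le_min => /andP[].
  + apply: gibbs_bound => //.
    apply: P3; first by move=> x; case: (pos x) => _ [].
    by move=> x; have := hmin th Tth x; rewrite le_min => /andP[].
Qed.
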